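(* Let $k\ge1$ be odd and, with $S,T,T_\omega=\begin{psmallmatrix}1&i\\0&1\end{psmallmatrix},L=\begin{psmallmatrix}i&0\\0&-i\end{psmallmatrix},U=TS,E=T_\omega SL$, let $W_{k,k}=\ker(\mathbf{1}+S)\cap\ker(\mathbf{1}-L)\cap\ker(\mathbf{1}+U+U^2)\cap\ker(\mathbf{1}+E+E^2)\subset V_{k,k}$. Let $\varepsilon_1=\begin{psmallmatrix}i&0\\0&1\end{psmallmatrix}$, so $P|\varepsilon_1=P(iz,\bar i\bar z)$. Then $W_{k,k}|\varepsilon_1=W_{k,k}$, and consequently $$W_{k,k}=W_{k,k}^{1}\oplus W_{k,k}^{-1}\oplus W_{k,k}^{i}\oplus W_{k,k}^{-i},$$ where $W_{k,k}^e=W_{k,k}\cap V_{k,k}^e$ and $V_{k,k}^e=\{P\in V_{k,k}:P(iz,\bar i\bar z)=eP(z,\bar z)\}$ for $e\in\{\pm1,\pm i\}$.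
   Context: $S=\begin{psmallmatrix}0&-1\\1&0\end{psmallmatrix}$, $T=\begin{psmallmatrix}1&1\\0&1\end{psmallmatrix}$. $V_{k,k}$ is the space of polynomials $\sum_{0\le i,j\le k}c_{ij}z^i\bar z^j$ over $\mathbb{C}$ with right action $(P|\gamma)(z,\bar z)=(cz+e)^k\overline{(cz+e)}^kP\!\left(\frac{az+b}{cz+e},\frac{\bar a\bar z+\bar b}{\bar c\bar z+\bar e}\right)$ for $\gamma=\begin{psmallmatrix}a&b\\c&e\end{psmallmatrix}$, extended linearly to the group ring; $\ker(X)=\{P:P|X=0\}$, and $W|\varepsilon_1=\{P|\varepsilon_1:P\in W\}$. *)

(* Defs.v *)
From HB Require Import structures.
From mathcomp Require Import all_boot all_order all_algebra.
Set Implicit Arguments. Unset Strict Implicit. Unset Printing Implicit Defensive.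
Import Order.TTheory GRing.Theory Num.Theory Num.Def.
Local Open Scope ring_scope.

(* The complex field is modelled by an arbitrary numClosedFieldType C
   (which has 'i and complex conjugation z^* ); C = ℂ is an instance. *)

Section Defs.
Variable C : numClosedFieldType.

Definition mx2 (a b c e : C) : 'M[C]_2 :=
  \matrix_(i < 2, j < 2)
    if i == ord0 then (if j == ord0 then a else b) else (if j == ord0 then c else e).

(* An element of V_{k,k}: P(z, zbar) = \sum_{i,j <= k} P i j z^i zbar^j,
   represented by its coefficient matrix. *)
Definition Vkk (k : nat) := 'M[C]_(k.+1).

Definition hpoly (k : nat) (a b c e : C) (i : nat) : {poly C} :=
  ('X * a%:P + b%:P) ^+ i * ('X * c%:P + e%:P) ^+ (k - i).

(* Right action: (P|g)(z,zbar) = (cz+e)^k conj(cz+e)^k P(gz, conj(g) zbar),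
   i.e. \sum_{i,j} P_ij (az+b)^i (cz+e)^(k-i) (a^* zbar+b^* )^j (c^* zbar+e^* )^(k-j),
   expanded in the monomials z^p zbar^q. *)
Definition slash (k : nat) (P : Vkk k) (g : 'M[C]_2) : Vkk k :=
  let a := g ord0 ord0 in let b := g ord0 ord_max in
  let c := g ord_max ord0 in let e := g ord_max ord_max in
  \matrix_(p < k.+1, q < k.+1)
    \sum_(i < k.+1) \sum_(j < k.+1)
      P i j * (hpoly k a b c e i)`_p * (hpoly k a^* b^* c^* e^* j)`_q.

(* Group ring elements: finite formal combinations \sum_t t.1 [t.2]. *)
Definition slashG (k : nat) (P : Vkk k) (X : seq (C * 'M[C]_2)) : Vkk k :=
  \sum_(t <- X) t.1 *: slash P t.2.

Definition kerG (k : nat) (X : seq (C * 'M[C]_2)) (P : Vkk k) : Prop :=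
  slashG P X = 0.

Definition one2 : 'M[C]_2 := 1%:M.
Definition Smx : 'M[C]_2 := mx2 0 (-1) 1 0.
Definition Tmx : 'M[C]_2 := mx2 1 1 0 1.
Definition Tw : 'M[C]_2 := mx2 1 'i 0 1.
Definition Lmx : 'M[C]_2 := mx2 'i 0 0 (- 'i).
Definition Umx : 'M[C]_2 := Tmx *m Smx.
Definition Emx : 'M[C]_2 := Tw *m Smx *m Lmx.
Definition eps1 : 'M[C]_2 := mx2 'i 0 0 1.

Definition Wkk (k : nat) (P : Vkk k) : Prop :=
  [/\ kerG [:: (1, one2); (1, Smx)] P,
      kerG [:: (1, one2); (-1, Lmx)] P,
      kerG [:: (1, one2); (1, Umx); (1, Umx *m Umx)] P &
      kerG [:: (1, one2); (1, Emx); (1, Emx *m Emx)] P].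

Definition subst_eps (k : nat) (P : Vkk k) : Vkk k :=
  \matrix_(p < k.+1, q < k.+1) ('i ^+ p * ('i^*) ^+ q * P p q).

Definition Vkk_e (k : nat) (e : C) (P : Vkk k) : Prop := subst_eps P = e *: P.
Definition Wkk_e (k : nat) (e : C) (P : Vkk k) : Prop := Wkk P /\ Vkk_e e P.

End Defs.

(* Main.v *)
Require Import Defs.
From HB Require Import structures.
From mathcomp Require Import all_boot all_order all_algebra.
From mathcomp Require Import ring.
Set Implicit Arguments. Unset Strict Implicit. Unset Printing Implicit Defensive.
Import Order.TTheory GRing.Theory Num.Theory Num.Def.
Local Open Scope ring_scope.

Section Homs.
Variable C : numClosedFieldType.
Implicit Types (f A B : {poly C}) (a b c e : C).

Definition lin a b : {poly C} := 'X * a%:P + b%:P.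
Definition homs (m : nat) f A B : {poly C} :=
  \sum_(r < m.+1) f`_r *: (A ^+ r * B ^+ (m - r)).

Lemma homsD m f g A B : homs m (f + g) A B = homs m f A B + homs m g A B.
Proof. by rewrite /homs -big_split; apply: eq_bigr => r _; rewrite coefD scalerDl. Qed.

Lemma homsZ m x f A B : homs m (x *: f) A B = x *: homs m f A B.
Proof. by rewrite /homs scaler_sumr; apply: eq_bigr => r _; rewrite coefZ scalerA. Qed.

Lemma homsX m f A B : homs m.+1 ('X * f) A B = A * homs m f A B.
Proof.
rewrite /homs big_ord_recl coefXM eqxx scale0r add0r mulr_sumr.
apply: eq_bigr => r _; rewrite coefXM /= add0n subSS exprS -mulrA scalerAr.
by [].
Qed.

Lemma homsB m f A B : (size f <= m.+1)%N -> homs m.+1 f A B = B * homs m f A B.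
Proof.
move=> hf; rewrite /homs big_ord_recr /= nth_default // scale0r addr0 mulr_sumr.
apply: eq_bigr => r _; rewrite /= subSn; last by rewrite -ltnS.
by rewrite exprS mulrCA scalerAr.
Qed.

Lemma size_lin a b : (size (lin a b) <= 2)%N.
Proof.
rewrite /lin mulrC size_MXaddC; case: ifP => // _.
by rewrite ltnS size_polyC leq_b1.
Qed.

Lemma size_linM a b f : leq (size (lin a b * f)) (size f).+1.
Proof.
apply: (leq_trans (size_polyMleq _ _)).
move: (size_lin a b); case: (size (lin a b)) => [|[|[|s]]] //= _.
by rewrite add0n; apply: leq_trans (leq_pred _) (leqnSn _).
Qed.

Lemma homs_lin n f A B a b : (size f <= n.+1)%N ->
  homs n.+1 (lin a b * f) A B = (a%:P * A + b%:P * B) * homs n f A B.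
Proof.
move=> hf.
have -> : lin a b * f = a *: ('X * f) + b *: f by rewrite /lin -!mul_polyC; ring.
rewrite homsD !homsZ homsX homsB // -!mul_polyC; ring.
Qed.

Lemma homs_prod A B a b c e i j :
  leq (size (lin a b ^+ i * lin c e ^+ j)) (i + j).+1 /\
  homs (i + j) (lin a b ^+ i * lin c e ^+ j) A B =
    (a%:P * A + b%:P * B) ^+ i * (c%:P * A + e%:P * B) ^+ j.
Proof.
elim: i => [|i IHi].
  rewrite add0n !expr0 !mul1r; elim: j => [|j [IHs IHh]].
    rewrite !expr0 size_poly1; split => //.
    by rewrite /homs big_ord1 coefC /= scale1r !expr0 mulr1.
  rewrite !exprS; split; first by apply: (leq_trans (size_linM _ _ _)).
  by rewrite homs_lin // IHh.
case: IHi => IHs IHh; rewrite !exprS -mulrA addSn; split.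
  by apply: (leq_trans (size_linM _ _ _)).
by rewrite homs_lin // IHh mulrA.
Qed.

End Homs.
Section Mats.
Variable C : numClosedFieldType.
Variable k : nat.
Implicit Types (a b c e : C).

Definition Hq a b c e : 'M[C]_k.+1 := \matrix_(i, p) (hpoly k a b c e i)`_p.

Lemma Hq_mul a b c e a' b' c' e' :
  Hq a b c e *m Hq a' b' c' e' =
  Hq (a*a'+b*c') (a*b'+b*e') (c*a'+e*c') (c*b'+e*e').
Proof.
apply/matrixP => i p; rewrite !mxE.
rewrite (eq_bigr (fun r : 'I_k.+1 => ((hpoly k a b c e i)`_r *: hpoly k a' b' c' e' r)`_p)); last first.
  by move=> r _; rewrite !mxE coefZ.
rewrite -coef_sum.
have -> : \sum_(r < k.+1) (hpoly k a b c e i)`_r *: hpoly k a' b' c' e' r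
   = homs k (hpoly k a b c e i) (lin a' b') (lin c' e') by [].
have := homs_prod (lin a' b') (lin c' e') a b c e i (k - i).
rewrite subnKC; last by rewrite -ltnS ltn_ord.
case=> _ ->; rewrite /hpoly.
have -> : a%:P * lin a' b' + b%:P * lin c' e' = lin (a*a'+b*c') (a*b'+b*e').
  by rewrite /lin !polyCD !polyCM; ring.
have -> : c%:P * lin a' b' + e%:P * lin c' e' = lin (c*a'+e*c') (c*b'+e*e').
  by rewrite /lin !polyCD !polyCM; ring.
by [].
Qed.

Lemma slashE (P : Vkk C k) g : slash P g =
  (Hq (g ord0 ord0) (g ord0 ord_max) (g ord_max ord0) (g ord_max ord_max))^T *m P *m
   Hq (g ord0 ord0)^* (g ord0 ord_max)^* (g ord_max ord0)^* (g ord_max ord_max)^*.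
Proof.
apply/matrixP => p q; rewrite !mxE exchange_big; apply: eq_bigr => j _.
rewrite !mxE mulr_suml; apply: eq_bigr => i _; rewrite !mxE; ring.
Qed.

Lemma mulmx2E (g h : 'M[C]_2) i j :
  (g *m h) i j = g i ord0 * h ord0 j + g i ord_max * h ord_max j.
Proof.
rewrite mxE big_ord_recr big_ord_recr big_ord0 /= add0r.
by congr (g i _ * h _ j + _); apply/val_inj.
Qed.

Lemma slash_comp (P : Vkk C k) g h : slash (slash P g) h = slash P (g *m h).
Proof.
rewrite [slash P (g *m h)]slashE !mulmx2E !rmorphD !rmorphM -!Hq_mul.
by rewrite slashE [slash P g]slashE trmx_mul !mulmxA.
Qed.

Lemma slashD (P Q : Vkk C k) g : slash (P + Q) g = slash P g + slash Q g.
Proof. by rewrite !slashE mulmxDr mulmxDl. Qed.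

Lemma slashZ x (P : Vkk C k) g : slash (x *: P) g = x *: slash P g.
Proof. by rewrite !slashE -scalemxAr -scalemxAl. Qed.

Lemma slashN (P : Vkk C k) g : slash (- P) g = - slash P g.
Proof. by rewrite -scaleN1r slashZ scaleN1r. Qed.

Lemma slash0 g : slash (0 : Vkk C k) g = 0.
Proof. by rewrite slashE mulmx0 mul0mx. Qed.

Lemma slash_mx2 (P : Vkk C k) a b c e :
  slash P (mx2 a b c e) = (Hq a b c e)^T *m P *m Hq a^* b^* c^* e^*.
Proof. by rewrite slashE !mxE. Qed.

Lemma Hq_diag x : Hq x 0 0 1 = diag_mx (\row_(i < k.+1) x ^+ i).
Proof.
apply/matrixP => i p; rewrite !mxE /hpoly polyC0 polyC1 mulr0 add0r addr0 expr1n mulr1.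
rewrite exprMn -rmorphXn coefMC coefXn mulrC eq_sym.
by rewrite mulr_natr.
Qed.

Lemma slash1 (P : Vkk C k) : slash P (one2 C) = P.
Proof.
rewrite /one2 slashE !mxE /= !rmorph0 !rmorph1 !Hq_diag.
have -> : diag_mx (\row_(i < k.+1) (1 : C) ^+ i) = 1%:M.
  by apply/matrixP => i j; rewrite !mxE expr1n.
by rewrite trmx1 mul1mx mulmx1.
Qed.

Lemma mx2_mul a b c e a' b' c' e' :
  mx2 a b c e *m mx2 a' b' c' e' =
  mx2 (a*a'+b*c') (a*b'+b*e') (c*a'+e*c') (c*b'+e*e').
Proof.
apply/matrixP => i j; rewrite mulmx2E !mxE /=.
by case: (i == ord0); case: (j == ord0).
Qed.

End Mats.
Section Main.
Variable C : numClosedFieldType.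
Variable k : nat.

Lemma hi : 'i * 'i = -1 :> C.
Proof. by rewrite -expr2 sqrCi. Qed.

Ltac mxid := rewrite /eps1 /Smx /Lmx /Umx /Emx /Tmx /Tw !mx2_mul; congr mx2; ring: hi.

Lemma M1 : eps1 C *m Smx C = Lmx C *m (Smx C *m eps1 C). Proof. mxid. Qed.
Lemma M2 : eps1 C *m Lmx C = Lmx C *m eps1 C. Proof. mxid. Qed.
Lemma M3 : eps1 C *m Umx C = Lmx C *m (Lmx C *m (Emx C *m eps1 C)). Proof. mxid. Qed.
Lemma M4 : eps1 C *m (Umx C *m Umx C) = (Emx C *m Emx C) *m eps1 C. Proof. mxid. Qed.
Lemma M5 : eps1 C *m Emx C =
  Lmx C *m (Lmx C *m (Smx C *m ((Umx C *m Umx C) *m (Smx C *m eps1 C)))). Proof. mxid. Qed.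
Lemma M6 : eps1 C *m (Emx C *m Emx C) = Smx C *m (Umx C *m (Smx C *m eps1 C)). Proof. mxid. Qed.

Lemma WkkE (P : Vkk C k) : Wkk P <->
  [/\ P + slash P (Smx C) = 0, P + - slash P (Lmx C) = 0,
      P + (slash P (Umx C) + slash P (Umx C *m Umx C)) = 0 &
      P + (slash P (Emx C) + slash P (Emx C *m Emx C)) = 0].
Proof.
by rewrite /Wkk /kerG /slashG !big_cons !big_nil /= !addr0 !scale1r scaleN1r !slash1.
Qed.

End Main.
Section Pres.
Variable C : numClosedFieldType.
Variable k : nat.

Lemma zmod_aux (V : zmodType) (X Y : V) : - X + (- (- X + - Y) + - Y) = 0.
Proof. by rewrite opprD !opprK addrK addNr. Qed.

Lemma Wkk_eps (P : Vkk C k) : Wkk P -> Wkk (slash P (eps1 C)).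
Proof.
case/WkkE => hS hL hU hE.
have hS' : slash P (Smx C) = - P.
  by apply/eqP; rewrite -addr_eq0 addrC hS.
have hL' : slash P (Lmx C) = P.
  by apply/eqP; rewrite eq_sym -subr_eq0 hL.
have hLl : forall X, slash P (Lmx C *m X) = slash P X.
  by move=> X; rewrite -slash_comp hL'.
have hSl : forall X, slash P (Smx C *m X) = - slash P X.
  by move=> X; rewrite -slash_comp hS' slashN.
apply/WkkE; split.
- by rewrite (slash_comp P (eps1 C) (Smx C)) M1 hLl hSl subrr.
- by rewrite (slash_comp P (eps1 C) (Lmx C)) M2 hLl subrr.
- rewrite (slash_comp P (eps1 C) (Umx C)) (slash_comp P (eps1 C) (Umx C *m Umx C)) M3 M4 !hLl.
  by rewrite -(slash_comp P (Emx C)) -(slash_comp P (Emx C *m Emx C)) -!slashD hE slash0.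
- rewrite (slash_comp P (eps1 C) (Emx C)) (slash_comp P (eps1 C) (Emx C *m Emx C)) M5 M6 !hLl !hSl.
  rewrite -(slash_comp P (Umx C)) -(slash_comp P (Umx C *m Umx C)).
  rewrite -(slash_comp (slash P (Umx C))) -(slash_comp (slash P (Umx C *m Umx C))).
  have hU' : slash P (Umx C *m Umx C) = - P + - slash P (Umx C).
    by apply/eqP; rewrite -opprD -addr_eq0 addrC -addrA hU.
  have hP : P = - slash P (Smx C) by rewrite hS' opprK.
  rewrite hU' {1}hP !slashD !slashN; exact: zmod_aux.
Qed.

End Pres.
Section Final.
Variable C : numClosedFieldType.
Variable k : nat.

Lemma subst_epsE (P : Vkk C k) : subst_eps P = slash P (eps1 C).
Proof.
rewrite /eps1 slash_mx2 !rmorph0 rmorph1 !Hq_diag tr_diag_mx mul_diag_mx mul_mx_diag.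
by apply/matrixP => p q; rewrite !mxE; ring.
Qed.

Lemma slashG_D (P Q : Vkk C k) X : slashG (P + Q) X = slashG P X + slashG Q X.
Proof. by rewrite /slashG -big_split; apply: eq_bigr => t _; rewrite slashD scalerDr. Qed.

Lemma slashG_Z x (P : Vkk C k) X : slashG (x *: P) X = x *: slashG P X.
Proof.
by rewrite /slashG scaler_sumr; apply: eq_bigr => t _; rewrite slashZ !scalerA mulrC.
Qed.

Lemma WkkD (P Q : Vkk C k) : Wkk P -> Wkk Q -> Wkk (P + Q).
Proof.
by case=> h1 h2 h3 h4 [g1 g2 g3 g4]; split; rewrite /kerG slashG_D ?h1 ?h2 ?h3 ?h4 ?g1 ?g2 ?g3 ?g4 addr0.
Qed.

Lemma WkkZ x (P : Vkk C k) : Wkk P -> Wkk (x *: P).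
Proof.
by case=> h1 h2 h3 h4; split; rewrite /kerG slashG_Z ?h1 ?h2 ?h3 ?h4 scaler0.
Qed.

Lemma Wkk_sig (P : Vkk C k) : Wkk P -> Wkk (subst_eps P).
Proof. by rewrite subst_epsE; apply: Wkk_eps. Qed.

Lemma w4 (p q : nat) : ('i ^+ p * ('i : C)^* ^+ q) ^+ 4 = 1.
Proof.
have h : ('i : C) ^+ 4 = 1 by rewrite (exprM _ 2 2) sqrCi expr2 mulrNN mulr1.
have h' : (('i : C)^*) ^+ 4 = 1 by rewrite conjCi (exprM _ 2 2) sqrrN sqrCi expr2 mulrNN mulr1.
by rewrite exprMn -!exprM !(mulnC _ 4) !exprM h h' !expr1n mulr1.
Qed.

End Final.
Section Scal.
Variable C : numClosedFieldType.

Lemma eig (w e x : C) : w^+4 = 1 -> e^+4 = 1 ->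
  w * (4^-1 * (x + e^+3 * (w * x) + e^+2 * (w * (w * x)) + e * (w * (w * (w * x))))) =
  e * (4^-1 * (x + e^+3 * (w * x) + e^+2 * (w * (w * x)) + e * (w * (w * (w * x))))).
Proof. move=> hw he; by field: hw he. Qed.

Lemma sum4 (w x j : C) : j^+2 = -1 ->
  x = 4^-1 * (x + 1^+3 * (w * x) + 1^+2 * (w * (w * x)) + 1 * (w * (w * (w * x))))
   + 4^-1 * (x + (-1)^+3 * (w * x) + (-1)^+2 * (w * (w * x)) + (-1) * (w * (w * (w * x))))
   + 4^-1 * (x + j^+3 * (w * x) + j^+2 * (w * (w * x)) + j * (w * (w * (w * x))))
   + 4^-1 * (x + (-j)^+3 * (w * x) + (-j)^+2 * (w * (w * x)) + (-j) * (w * (w * (w * x)))).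
Proof. move=> hj; by field: hj. Qed.

Lemma w4x (w x : C) : w^+4 = 1 -> w * (w * (w * (w * x))) = x.
Proof. move=> hw; ring: hw. Qed.

Lemma four_eq0 (a : C) : 4 * a = 0 -> a = 0.
Proof.
move/eqP; rewrite mulf_eq0 => /orP [|/eqP //].
by rewrite pnatr_eq0.
Qed.

Lemma uniq4 (w a b c d j : C) : j^+2 = -1 -> w*a = 1*a -> w*b = -1*b -> w*c = j*c -> w*d = -j*d ->
  a + b + c + d = 0 -> [/\ a = 0, b = 0, c = 0 & d = 0].
Proof.
move=> hj ha hb hc hd hs.
have E t : 0 = a*t + b*t + c*t + d*t by rewrite -!mulrDl hs mul0r.
split; apply: four_eq0.
- have := E (1+w+w^+2+w^+3).
  have -> : a*(1+w+w^+2+w^+3) = 4*a by ring: ha.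
  have -> : b*(1+w+w^+2+w^+3) = 0 by ring: hb.
  have -> : c*(1+w+w^+2+w^+3) = 0 by ring: hj hc.
  have -> : d*(1+w+w^+2+w^+3) = 0 by ring: hj hd.
  by rewrite !addr0 => ->.
- have := E (1-w+w^+2-w^+3).
  have -> : a*(1-w+w^+2-w^+3) = 0 by ring: ha.
  have -> : b*(1-w+w^+2-w^+3) = 4*b by ring: hb.
  have -> : c*(1-w+w^+2-w^+3) = 0 by ring: hj hc.
  have -> : d*(1-w+w^+2-w^+3) = 0 by ring: hj hd.
  by rewrite add0r !addr0 => ->.
- have := E (1-j*w+(j*w)^+2-(j*w)^+3).
  have -> : a*(1-j*w+(j*w)^+2-(j*w)^+3) = 0 by ring: hj ha.
  have -> : b*(1-j*w+(j*w)^+2-(j*w)^+3) = 0 by ring: hj hb.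
  have -> : c*(1-j*w+(j*w)^+2-(j*w)^+3) = 4*c by ring: hj hc.
  have -> : d*(1-j*w+(j*w)^+2-(j*w)^+3) = 0 by ring: hj hd.
  by rewrite !add0r addr0 => ->.
- have := E (1+j*w+(j*w)^+2+(j*w)^+3).
  have -> : a*(1+j*w+(j*w)^+2+(j*w)^+3) = 0 by ring: hj ha.
  have -> : b*(1+j*w+(j*w)^+2+(j*w)^+3) = 0 by ring: hj hb.
  have -> : c*(1+j*w+(j*w)^+2+(j*w)^+3) = 0 by ring: hj hc.
  have -> : d*(1+j*w+(j*w)^+2+(j*w)^+3) = 4*d by ring: hj hd.
  by rewrite !add0r => ->.
Qed.

End Scal.
Lemma e4N (C : numClosedFieldType) (x : C) : (- x) ^+ 4 = x ^+ 4.
Proof. by rewrite !(exprM _ 2 2) sqrrN. Qed.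

Lemma i4 (C : numClosedFieldType) : ('i : C) ^+ 4 = 1.
Proof. by rewrite (exprM _ 2 2) sqrCi expr2 mulrNN mulr1. Qed.

Unset Implicit Arguments.
Theorem proposition5p2 (C : numClosedFieldType) (k : nat) (hk : odd k) :
  (* W_{k,k} | eps1 = W_{k,k} *)
  ((forall P : Vkk C k, Wkk P -> Wkk (slash P (eps1 C))) /\
   (forall Q : Vkk C k, Wkk Q -> exists2 P : Vkk C k, Wkk P & slash P (eps1 C) = Q))
  /\
  (* W = W^1 ⊕ W^{-1} ⊕ W^i ⊕ W^{-i} *)
  ((forall P : Vkk C k, Wkk P ->
      exists P1 P2 P3 P4 : Vkk C k,
        [/\ Wkk_e 1 P1, Wkk_e (-1) P2, Wkk_e 'i P3, Wkk_e (- 'i) P4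
          & P = P1 + P2 + P3 + P4]) /\
   (forall P1 P2 P3 P4 : Vkk C k,
      Wkk_e 1 P1 -> Wkk_e (-1) P2 -> Wkk_e 'i P3 -> Wkk_e (- 'i) P4 ->
      Wkk (P1 + P2 + P3 + P4)) /\
   (forall P1 P2 P3 P4 : Vkk C k,
      Wkk_e 1 P1 -> Wkk_e (-1) P2 -> Wkk_e 'i P3 -> Wkk_e (- 'i) P4 ->
      P1 + P2 + P3 + P4 = 0 -> [/\ P1 = 0, P2 = 0, P3 = 0 & P4 = 0])).
Proof.
have hj : ('i : C) ^+ 2 = -1 := sqrCi C.
split.
  split; first by move=> P; apply: Wkk_eps.
  move=> Q hQ.
  exists (subst_eps (subst_eps (subst_eps Q))).
    by do 3 apply: Wkk_sig.
  rewrite -subst_epsE; apply/matrixP => p q; rewrite !mxE; exact: w4x (w4 C p q).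
split.
  move=> P hP.
  pose Pe (e : C) := 4^-1 *: (P + e^+3 *: subst_eps P + e^+2 *: subst_eps (subst_eps P)
                       + e *: subst_eps (subst_eps (subst_eps P))).
  have s1 := Wkk_sig hP; have s2 := Wkk_sig s1; have s3 := Wkk_sig s2.
  have hW e : Wkk (Pe e).
    apply/WkkZ/WkkD; last exact/WkkZ.
    apply/WkkD; last exact/WkkZ.
    by apply/WkkD; last exact/WkkZ.
  have hV e : e^+4 = 1 -> Vkk_e e (Pe e).
    move=> he; rewrite /Vkk_e /Pe; apply/matrixP => p q; rewrite !mxE.
    exact: eig (w4 C p q) he.
  exists (Pe 1), (Pe (-1)), (Pe 'i), (Pe (-'i)); split.
  - by split; [exact: hW | apply: hV; rewrite expr1n].
  - by split; [exact: hW | apply: hV; rewrite e4N expr1n].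
  - by split; [exact: hW | apply: hV; rewrite i4].
  - by split; [exact: hW | apply: hV; rewrite e4N i4].
  - apply/matrixP => p q; rewrite /Pe !mxE; exact: sum4 hj.
split.
  move=> P1 P2 P3 P4 [h1 _] [h2 _] [h3 _] [h4 _].
  by apply: WkkD => //; apply: WkkD => //; apply: WkkD.
move=> P1 P2 P3 P4 [_ h1] [_ h2] [_ h3] [_ h4] hs.
suff H : forall p q, [/\ P1 p q = 0, P2 p q = 0, P3 p q = 0 & P4 p q = 0].
  by split; apply/matrixP => p q; rewrite mxE; case: (H p q).
move=> p q.
have e1 := congr1 (fun M : Vkk C k => M p q) h1.
have e2 := congr1 (fun M : Vkk C k => M p q) h2.
have e3 := congr1 (fun M : Vkk C k => M p q) h3.
have e4 := congr1 (fun M : Vkk C k => M p q) h4.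
have es := congr1 (fun M : Vkk C k => M p q) hs.
move: e1 e2 e3 e4 es; rewrite /= !mxE => e1 e2 e3 e4 es.
exact: (uniq4 hj e1 e2 e3 e4 es).
Qed.
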